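(* Let $\alpha>0$ and let $X_{1,1},X_{1,2}$ be i.i.d. real random variables such that $$x^{1+2\alpha}\,\mathbb P\big(|X_{1,1}X_{1,2}|\ge\sqrt{x\log x}\big)\to0\quad\text{as }x\to\infty.$$ Then $$\mathbb E\Big(\frac{|X_{1,1}|^{2+4\alpha}}{(1+\log|X_{1,1}|)^{4+4\alpha}}\Big)<\infty.$$
   Context: Here $\log x$ denotes $\ln\max(x,e)$ (so $\log|X_{1,1}|\ge1$). *)

(* Defs.v *)
From HB Require Import structures.
From mathcomp Require Import all_boot all_order all_algebra.
From mathcomp Require Import all_classical all_reals all_analysis.
Set Implicit Arguments. Unset Strict Implicit. Unset Printing Implicit Defensive.
Import Order.TTheory GRing.Theory Num.Theory.
Local Open Scope classical_set_scope.
Local Open Scope ring_scope.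

(* The paper's convention: log x := ln (max x e), so that log x >= 1. *)
Definition plog {R : realType} (x : R) : R := ln (Num.max x (expR 1)).

Definition indep2 {d} {T : measurableType d} {R : realType}
  (P : probability T R) (X Y : T -> R) : Prop :=
  forall A B : set R, measurable A -> measurable B ->
    P (X @^-1` A `&` Y @^-1` B) = (P (X @^-1` A) * P (Y @^-1` B))%E.

Definition ident_distr {d} {T : measurableType d} {R : realType}
  (P : probability T R) (X Y : T -> R) : Prop :=
  forall A : set R, measurable A -> P (X @^-1` A) = P (Y @^-1` A).

(* Main.v *)
Require Import Defs.
From HB Require Import structures.
From mathcomp Require Import all_boot all_order all_algebra.
From mathcomp Require Import all_classical all_reals all_analysis.
From mathcomp Require Import ring lra measurable_realfun.
Import Order.TTheory GRing.Theory Num.Theory.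
Local Open Scope classical_set_scope.
Local Open Scope ring_scope.

Section H.
Variable R : realType.
Implicit Types x y t : R.

Lemma plog_ge1 x : 1 <= plog x.
Proof.
rewrite /plog -[X in X <= _](expRK 1) ler_ln ?posrE ?expR_gt0 ?le_max ?lexx ?orbT//.
by rewrite lt_max expR_gt0 orbT.
Qed.

Lemma plog_le x y : x <= y -> plog x <= plog y.
Proof.
move=> xy; rewrite /plog ler_ln ?posrE ?lt_max ?expR_gt0 ?orbT//.
by rewrite ge_max !le_max xy lexx !orbT.
Qed.

Lemma dyadic t : 1 <= t -> exists k, (2 ^+ k <= t) && (t < 2 ^+ k.+1).
Proof.
move=> t1.
have ex : exists n, t < 2 ^+ n.
  exists (Num.Def.trunc t).+1.
  have := truncn_gt_nat t (Num.Def.trunc t); rewrite ltnn => /esym/negbT.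
  rewrite -ltNge => /lt_le_trans; apply.
  rewrite -natrX ler_nat; apply: ltnW; exact: ltn_expl.
pose n := ex_minn ex.
have tn : t < 2 ^+ n by rewrite /n; case: ex_minnP.
have nmin m : t < 2 ^+ m -> (n <= m)%N by rewrite /n; case: ex_minnP => k _; apply.
case: n tn nmin => [|k] tn nmin.
  by rewrite expr0 in tn; lra.
exists k; rewrite tn andbT leNgt; apply/negP => /nmin; by rewrite ltnn.
Qed.

Lemma ln_le_plog x : 0 < x -> ln x <= plog x.
Proof. by move=> x0; rewrite /plog ler_ln ?posrE ?lt_max ?expR_gt0 ?orbT ?le_max ?lexx. Qed.

Definition mm : R := Num.min 1 (ln 2).

Lemma mm_gt0 : 0 < mm.
Proof. by rewrite /mm lt_min ltr01 ln_gt0// ltr1n. Qed.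

Lemma plog_lin k : mm * k.+1%:R <= 1 + plog (2 ^+ k : R).
Proof.
have l2 : 0 < ln (2:R) by rewrite ln_gt0// ltr1n.
have h : ln (2:R) *+ k <= plog (2 ^+ k : R).
  by rewrite -lnXn// ln_le_plog// exprn_gt0.
have m1 : mm <= 1 by rewrite /mm ge_min lexx.
have m2 : mm <= ln 2 by rewrite /mm ge_min lexx orbT.
rewrite -natr1 mulrDr mulr1 addrC lerD// mulr_natr.
apply: le_trans h; by rewrite lerMn2r m2 orbT.
Qed.


Lemma key (p q r : R) k : 0 <= p -> 0 < q -> 0 <= r ->
  r * q <= ((((2:R) ^+ k) ^+ 2 / (2 * k.+1%:R)) `^ p)^-1 ->
  (2 ^+ k.+1 : R) `^ (p * 2) / (1 + plog (2 ^+ k : R)) `^ (p + (p + 2)) * r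
   <= 8 `^ p / (q * mm `^ (p + (p + 2))) / (k.+1%:R) ^+ 2.
Proof.
move=> p0 q0 r0 rq.
set c : R := k.+1%:R.
have c1 : 1 <= c by rewrite /c ler1n.
have c0 : 0 < c by lra.
have t0 : (0:R) < 2 ^+ k by apply: exprn_gt0.
set x := (2 ^+ k) ^+ 2 / (2 * c).
have x0 : 0 < x by rewrite /x divr_gt0 ?exprn_gt0 ?mulr_gt0.
set b := p + (p + 2).
set D := (1 + plog (2 ^+ k : R)) `^ b.
set A := (8:R) `^ p.
set C := c `^ p.
set Y := x `^ p.
have Y0 : 0 < Y by rewrite /Y powR_gt0.
have C0 : 0 < C by rewrite /C powR_gt0.
have A0 : 0 < A by rewrite /A powR_gt0.
have mb0 : 0 < mm `^ b by rewrite powR_gt0// mm_gt0.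
have E1 : (2 ^+ k.+1 : R) `^ (p * 2) = A * C * Y.
  rewrite mulrC powRrM (powR_mulrn 2) ?exprn_ge0// /A /C /Y.
  rewrite -powRM; [|lra|lra]. rewrite -powRM; [|lra|lra].
  congr (_ `^ _); rewrite /x (exprS 2 k); set u := 2 ^+ k; field; lra.
have Dge : mm `^ b * C * c ^+ 2 <= D.
  have h1 : mm `^ b * c `^ b <= D.
    rewrite -powRM; [|exact: ltW mm_gt0|lra]. rewrite /D.
 apply: ge0_ler_powR; rewrite ?nnegrE.
    - rewrite /b; lra.
    - have := mm_gt0; nra.
    - have := plog_ge1 (2 ^+ k : R); lra.
    - exact: plog_lin.
  apply: le_trans h1; rewrite -mulrA; apply: ler_wpM2l; first exact: ltW.
  rewrite /b powRD; last by rewrite (gt_eqF c0) implybT.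
  apply: ler_wpM2l; first exact: powR_ge0.
  rewrite -(@powR_mulrn _ c 2); last lra.
  by apply: ler_powR => //; lra.
have D0 : 0 < D by apply: lt_le_trans Dge; rewrite !mulr_gt0// exprn_gt0.
have rq' : r <= Y^-1 / q by rewrite ler_pdivlMr.
rewrite E1; apply: (le_trans (y := A * C * Y / D * (Y^-1 / q))).
  apply: ler_wpM2l => //; apply: divr_ge0; [|exact: ltW]; apply: mulr_ge0; [apply: mulr_ge0|]; exact: ltW.
have -> : A * C * Y / D * (Y^-1 / q) = A * C / q / D by field; lra.
have -> : A / (q * mm `^ b) / c ^+ 2 = A * C / q / (mm `^ b * C * c ^+ 2).
  by field; apply/and4P; split; rewrite gt_eqF// ?exprn_gt0.
have E0 : 0 < mm `^ b * C * c ^+ 2 by rewrite !mulr_gt0// exprn_gt0.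
apply: ler_wpM2l; first by apply: divr_ge0; [apply: mulr_ge0|]; exact: ltW.
by rewrite lef_pV2 ?posrE.
Qed.

Variables a b : R.
Hypothesis a0 : 0 <= a.
Hypothesis b0 : 0 <= b.

Definition ff t := t `^ a / (1 + plog t) `^ b.
Definition MM (k : nat) := (2 ^+ k.+1 : R) `^ a / (1 + plog (2 ^+ k : R)) `^ b.

Lemma den_ge1 t : 1 <= (1 + plog t) `^ b.
Proof.
have h := plog_ge1 t.
have := @ge0_ler_powR R b b0 1 (1 + plog t); rewrite powR1 /=; apply;
  rewrite ?nnegrE//; lra.
Qed.

Lemma den_gt0 t : 0 < (1 + plog t) `^ b.
Proof. exact: lt_le_trans ltr01 (den_ge1 t). Qed.

Lemma ff_ge0 t : 0 <= ff t.
Proof. by rewrite /ff divr_ge0 ?powR_ge0. Qed.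

Lemma MM_ge0 k : 0 <= MM k.
Proof. by rewrite /MM divr_ge0 ?powR_ge0. Qed.

Lemma ff_small t : 0 <= t -> t < 1 -> ff t <= 1.
Proof.
move=> t0 t1; rewrite /ff ler_pdivrMr ?den_gt0// mul1r.
apply: le_trans (den_ge1 t).
have := @ge0_ler_powR R a a0 t 1; rewrite powR1 /=; apply; rewrite ?nnegrE//; lra.
Qed.

Lemma ff_le_MM k t : 2 ^+ k <= t -> t <= 2 ^+ k.+1 -> ff t <= MM k.
Proof.
move=> kt tk.
have k0 : (0:R) < 2 ^+ k by apply: exprn_gt0.
rewrite /ff /MM; apply: ler_pM.
- exact: powR_ge0.
- by rewrite invr_ge0 powR_ge0.
- by apply: ge0_ler_powR; rewrite ?nnegrE//; lra.
- rewrite lef_pV2 ?posrE ?den_gt0//.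
  apply: ge0_ler_powR; rewrite ?nnegrE //.
  + have := plog_ge1 (2 ^+ k : R); lra.
  + have := plog_ge1 t; lra.
  + by rewrite lerD2l; apply: plog_le.
Qed.

Local Open Scope ereal_scope.
Lemma ff_series t (I : nat -> R) : (0 <= t)%R ->
  (forall k, 2 ^+ k <= t -> I k = 1)%R -> (forall k, 0 <= I k)%R ->
  (ff t)%:E <= 1%:E + \sum_(k <oo) (MM k * I k)%:E.
Proof.
move=> t0 I1 I0.
have s0 : forall n, (0 <= n)%N -> true -> 0 <= (MM n * I n)%:E.
  by move=> n _ _; rewrite lee_fin mulr_ge0 ?MM_ge0.
have [t1|t1] := ltP t 1%R.
  rewrite -[X in X <= _]adde0 leeD// ?lee_fin ?ff_small//.
  exact: nneseries_ge0.
have [k /andP[kt tk]] := @dyadic t t1.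
apply: le_trans (leeDr _ _); last by rewrite lee_fin.
apply: le_trans (nneseries_lim_ge k.+1 s0).
rewrite big_nat_recr//= -[X in X <= _]add0e leeD//.
  by rewrite sume_ge0// => n _; apply: s0.
by rewrite lee_fin I1// mulr1 ff_le_MM// ltW.
Qed.

End H.

Section H2.
Variable R : realType.

Lemma sum_invsq n : \sum_(k < n) ((k.+1%:R)^-2 : R) <= 2 - 2 / n.+1%:R.
Proof.
elim: n => [|n IH]; first by rewrite big_ord0 divr1 subrr.
rewrite big_ord_recr /=; apply: (le_trans (lerD IH (lexx _))).
rewrite -[n.+2%:R]natr1 -[n.+1%:R]natr1.
have n0 : (0:R) <= n%:R by [].
set m : R := n%:R in n0 *.
rewrite -subr_ge0.
have -> : 2 - 2 / (m + 1 + 1) - (2 - 2 / (m + 1) + (m + 1)^-2) = 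
  (m * (m+1)^-2 / (m+2)) by field; lra.
by apply: divr_ge0; [apply: mulr_ge0 => //; rewrite invr_ge0 exprn_ge0//; lra|lra].
Qed.

Lemma sum_invsq2 n : \sum_(k < n) ((k.+1%:R)^-2 : R) <= 2.
Proof.
apply: le_trans (sum_invsq n) _; rewrite lerBlDr lerDl divr_ge0//.
Qed.

Local Open Scope ereal_scope.
Lemma series_fin (K : R) k0 : (0 <= K)%R ->
  \sum_(k0 <= k <oo) ((K / k.+1%:R ^+ 2)%:E) <= (K * 2)%:E.
Proof.
move=> K0.
have u0 : forall n, (0 <= n)%N -> true -> 0 <= (K / n.+1%:R ^+ 2)%:E.
  by move=> n _ _; rewrite lee_fin divr_ge0.
apply: le_trans (_ : \sum_(0 <= k <oo) ((K / k.+1%:R ^+ 2)%:E) <= _).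
  rewrite (nneseries_split 0 k0); last by move=> k _; apply: u0.
  rewrite add0n leeDr// sume_ge0// => k _; exact: u0.
apply: lime_le; first exact: is_cvg_nneseries.
apply: nearW => n; rewrite sumEFin lee_fin big_mkord.
rewrite -mulr_sumr ler_wpM2l//.
exact: sum_invsq2.
Qed.
End H2.

Section H3.
Variable R : realType.

Definition xk (k : nat) : R := (2 ^+ k) ^+ 2 / (2 * k.+1%:R).

Lemma pow2_ge k : (k.+1%:R : R) <= 2 ^+ k.
Proof. by rewrite -natrX ler_nat; apply: ltn_expl. Qed.

Lemma xk_gt0 k : 0 < xk k.
Proof. by rewrite /xk divr_gt0 ?exprn_gt0 ?mulr_gt0. Qed.

Lemma xk_large k : 2 ^+ k / 2 <= xk k.
Proof.
have h := pow2_ge k; have t0 : (0:R) < 2 ^+ k by apply: exprn_gt0.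
rewrite /xk -subr_ge0; set t : R := 2 ^+ k in t0 h *; set c : R := k.+1%:R in h *.
have -> : t ^+ 2 / (2 * c) - t / 2 = t * (t - c) / (2 * c).
  by field; rewrite addrC natr1 pnatr_eq0.
have c0 : 0 < c by [].
by apply: divr_ge0; [apply: mulr_ge0|]; lra.
Qed.

Lemma xk_sqrt k : Num.sqrt (xk k * plog (xk k)) <= 2 ^+ k.
Proof.
have t0 : (0:R) < 2 ^+ k by apply: exprn_gt0.
have c0 : (0:R) < k.+1%:R by [].
have c1 : (1:R) <= k.+1%:R by rewrite ler1n.
have x0 := xk_gt0 k.
have xle : xk k <= (2 ^+ k) ^+ 2.
  rewrite /xk ler_pdivrMr ?mulr_gt0// ler_peMr ?exprn_ge0//; lra.
have e2 : (4:R) <= expR 2.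
  have h := expR_ge1Dx (1:R).
  have -> : (2:R) = 1 + 1 by [].
  rewrite expRD; nra.
have e4 : (2 ^+ k) ^+ 2 <= expR (2 * k.+1%:R) :> R.
  rewrite -exprM mulnC exprM.
  have -> : (2:R) * k.+1%:R = k%:R * 2 + 2.
    by rewrite -natr1; ring.
  rewrite expRD expRM_natl.
  have h2 : (1:R) <= expR 2 by lra.
  have : (2 * 2 : R) ^+ k <= expR 2 ^+ k.
    apply: lerXn2r; rewrite ?nnegrE; lra.
  rewrite -[X in X <= _ -> _](mulr1) => h; apply: le_trans (ler_pM _ _ h h2) => //.
  by rewrite !mulr1 expr2.
have pl : plog (xk k) <= 2 * k.+1%:R.
  rewrite /plog -[X in _ <= X]expRK.
  rewrite ler_ln ?posrE ?lt_max ?expR_gt0 ?orbT//.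
  rewrite ge_max; apply/andP; split; first exact: le_trans xle e4.
  rewrite ler_expR; lra.
have h1 : xk k * plog (xk k) <= (2 ^+ k) ^+ 2.
  apply: le_trans (_ : xk k * (2 * k.+1%:R) <= _).
    by apply: ler_wpM2l => //; exact: ltW.
  rewrite /xk mulfVK //; lra.
apply: le_trans (_ : Num.sqrt ((2 ^+ k) ^+ 2) <= _).
  by apply: ler_wsqrtr.
by rewrite sqrtr_sqr ger0_norm // ltW.
Qed.
End H3.

Lemma meas_ge (d : measure_display) (T : measurableType d) (R : realType)
  (f : T -> R) (c : R) : measurable_fun setT f ->
  measurable [set w | c <= `|f w|].
Proof.
move=> mf.
have -> : [set w | c <= `|f w|] = ((@Num.Def.normr _ R) \o f) @^-1` `[c, +oo[%classic.
  by apply/seteqP; split => w /=; rewrite in_itv /= andbT.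
rewrite -[X in measurable X]setTI.
exact: (measurableT_comp (@measurable_realfun.normr_measurable R setT) mf measurableT
  (measurable_itv `[c, +oo[)).
Qed.

Lemma mff (R : realType) (a b : R) :
  measurable_fun setT (ff _ a b).
Proof.
rewrite (_ : ff _ a b = fun t => t `^ a * (1 + ln (Num.max t (expR 1))) `^ (- b)).
  have m1 : measurable_fun setT (fun t : R => Num.max t (expR 1)).
    by apply: measurable_maxr; [exact: measurable_id|exact: measurable_cst].
  have m2 : measurable_fun setT (fun t : R => 1 + ln (Num.max t (expR 1))).
    apply: measurable_funD; first exact: measurable_cst.
    have := measurableT_comp (@measurable_ln R) m1. exact.
  apply: measurable_funM; first exact: measurable_powR.
  exact: (measurableT_comp (f := fun u : R => u `^ (- b)) (@measurable_powR R (- b)) m2).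
by apply/funext => t; rewrite /ff powRN.
Qed.

Lemma PE (d : measure_display) (T : measurableType d) (R : realType)
  (P : probability T R) (S : set T) : measurable S ->
  P S = (fine (P S))%:E.
Proof.
move=> mS; rewrite fineK// ge0_fin_numE ?measure_ge0//.
exact: le_lt_trans (probability_le1 P mS) (ltey _).
Qed.

Theorem lemma6p4 (d : measure_display) (T : measurableType d) (R : realType)
  (P : probability T R) (X1 X2 : {RV P >-> R}) (alpha : R) :
  0 < alpha ->
  indep2 P X1 X2 ->
  ident_distr P X1 X2 ->
  ((x `^ (1 + 2 * alpha))%:E
     * P [set w | (Num.sqrt (x * plog x) <= `|X1 w * X2 w|)%R])%E
    @[x --> +oo] --> 0%E ->
  (\int[P]_w ((`|X1 w| `^ (2 + 4 * alpha)
                / (1 + plog `|X1 w|) `^ (4 + 4 * alpha))%:E) < +oo)%E.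
Proof.
move=> al0 hind hid hlim.
set p := 1 + 2 * alpha.
have p0 : 0 <= p by rewrite /p; lra.
have ea : 2 + 4 * alpha = p * 2 by rewrite /p; ring.
have eb : 4 + 4 * alpha = p + (p + 2) by rewrite /p; ring.
rewrite ea eb.
set a := p * 2. set b := p + (p + 2).
have a0 : 0 <= a by rewrite /a; lra.
have b0 : 0 <= b by rewrite /b; lra.
pose A k := [set y : R | 2 ^+ k <= `|y|].
have mA k : measurable (A k).
  by have := @meas_ge _ _ R id (2 ^+ k) (@measurable_id _ _ setT).
pose B k := X1 @^-1` A k.
have mB k : measurable (B k) := measurable_funPTI X1 (mA k).
have mX1 : measurable_fun setT X1 := measurable_funP X1.
have mg : measurable_fun setT (fun w => (ff R a b `|X1 w|)%:E).
  apply/measurable_EFinP.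
  have := measurableT_comp (@mff R a b) (measurableT_comp (@normr_measurable R setT) mX1).
  exact.
pose M k := MM R a b k.
have M0 k : 0 <= M k by apply: MM_ge0.
pose u k := ((M k)%:E * P (B k))%E.
have step1 : (\int[P]_w (ff R a b `|X1 w|)%:E <= 1%:E + \sum_(k <oo) u k)%E.
  pose h := fun w => (1%:E + \sum_(k <oo) (M k * \1_(B k) w)%:E)%E.
  have hk0 k w : (0 <= (M k * \1_(B k) w)%:E)%E.
    by rewrite lee_fin mulr_ge0// indic_ge0.
  have mhk k : measurable_fun setT (fun w => (M k * \1_(B k) w)%:E).
    apply/measurable_EFinP; apply: measurable_funM; first exact: measurable_cst.
    exact: measurable_indic.
  have mh : measurable_fun setT h.
    apply: emeasurable_funD; first exact: measurable_cst.
    exact: (ge0_emeasurable_sum (P := xpredT) (fun k x _ _ => hk0 k x) (fun k _ => mhk k)).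
  have le1 : (\int[P]_w (ff R a b `|X1 w|)%:E <= \int[P]_w h w)%E.
    apply: (ge0_le_integral P measurableT _ mg mh).
    - by move=> w _; rewrite lee_fin ff_ge0.
    - move=> w _; apply: (@ff_series R a b a0 b0).
      + exact: normr_ge0.
      + by move=> k kw; rewrite indicE mem_set.
      + by move=> k; rewrite indicE.
  apply: (le_trans le1); rewrite le_eqVlt; apply/orP; left; apply/eqP.
  rewrite /h ge0_integralD//; last first.
  - exact: (ge0_emeasurable_sum (P := xpredT) (fun k x _ _ => hk0 k x) (fun k _ => mhk k)).
  - by move=> w _; apply: nneseries_ge0 => k _ _; apply: hk0.
  congr (_ + _)%E.
    by rewrite integral_cst// mul1e; apply: probability_setT.
  rewrite integral_nneseries//; apply: eq_eseriesr => k _.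
  rewrite (@integralZl_indic _ _ _ P setT measurableT (fun _ => B k)) //.
    by rewrite integral_indic// setIT.
  by rewrite ltNge M0.

have mX2 : measurable_fun setT X2 := measurable_funP X2.
pose v k := M k * fine (P (B k)).
have v0 k : 0 <= v k by rewrite /v mulr_ge0// fine_ge0// measure_ge0.
have uE k : u k = (v k)%:E by rewrite /u (@PE _ _ _ P _ (mB k)).
have step2 : (\sum_(k <oo) u k < +oo)%E.
  under eq_eseriesr do rewrite uE.
  have [q0|qpos] := eqVneq (P (B 0)) 0%E.
    rewrite eseries0 ?ltey// => k _ _.
    suff h : P (B k) = 0%E by rewrite /v h mulr0.
    apply/eqP; rewrite eq_le measure_ge0 andbT -q0.
    apply: le_measure; rewrite ?inE//.
    move=> w; rewrite /B /A /= expr0; apply: le_trans.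
    by apply: exprn_ege1; rewrite ler1n.

  have qP := @PE _ _ _ P _ (mB 0).
  set q := fine (P (B 0)) in qP.
  have q0 : 0 < q.
    rewrite lt_neqAle fine_ge0 ?measure_ge0// andbT eq_sym.
    by apply: contra qpos => /eqP q0; rewrite qP q0.
  have := hlim _ (open_ereal_lt' (lte01 (R:=R))).
  case => Mx [Mreal HM].
  pose K := 8 `^ p / (q * mm R `^ b).
  have K0 : 0 <= K by rewrite /K divr_ge0 ?powR_ge0// mulr_ge0 ?powR_ge0// ltW.
  have bnd k : Mx < xk R k -> v k <= K / (k.+1%:R) ^+ 2.
    move=> Mk.
    set x := xk R k.
    have x0 : 0 < x := xk_gt0 R k.
    pose S := [set w | Num.sqrt (x * plog x) <= `|X1 w * X2 w|].
    have mS : measurable S.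
      exact: (@meas_ge _ _ R (fun w => X1 w * X2 w) _ (measurable_funM mX1 mX2)).
    have hx := HM x Mk.
    have sP := @PE _ _ _ P _ mS.
    have s_le : fine (P S) <= (x `^ p)^-1.
      move: hx; rewrite /= -/S sP -EFinM lte_fin => /ltW.
      rewrite -ler_pdivlMl ?powR_gt0// mulr1 /= => h; exact: h.
    have inc : B k `&` X2 @^-1` A 0 `<=` S.
      move=> w [h1 h2]; rewrite /B /A /= in h1 h2; rewrite expr0 in h2.
      apply: le_trans (xk_sqrt R k) _; rewrite normrM.
      rewrite -[2 ^+ k]mulr1; apply: ler_pM => //; exact: exprn_ge0.
    have ind := hind (A k) (A 0) (mA k) (mA 0).
    have idd := hid (A 0) (mA 0).
    have h3 : (P (B k) * P (B 0%N) <= P S)%E.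
      rewrite /B idd -ind; apply: le_measure; rewrite ?inE //.
      by apply: measurableI => //; exact: measurable_funPTI.
    rewrite (@PE _ _ _ P _ (mB k)) qP sP -EFinM lee_fin in h3.
    have r0 : 0 <= fine (P (B k)) by rewrite fine_ge0// measure_ge0.
    exact: (key R p q (fine (P (B k))) k p0 q0 r0 (le_trans h3 s_le)).
  pose k0 := Num.Def.trunc (2 * `|Mx|).
  have k0gt : 2 * `|Mx| < k0.+1%:R.
    have := truncn_gt_nat (2 * `|Mx|) k0; rewrite ltnn => /esym/negbT.
    by rewrite -ltNge.
  have bnd' k : (k0 <= k)%N -> v k <= K / (k.+1%:R) ^+ 2.
    move=> kk; apply: bnd.
    have h1 : (k0.+1%:R : R) <= k.+1%:R by rewrite ler_nat ltnS.
    have h2 := pow2_ge R k.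
    have h3 := xk_large R k.
    have h4 : Mx <= `|Mx| := ler_norm Mx.
    lra.
  rewrite (nneseries_split 0 k0); last by move=> k _; rewrite lee_fin.
  rewrite add0n; apply: lte_add_pinfty.
    by rewrite sumEFin ltey.
  rewrite -nneseries_addn; last by move=> k; rewrite lee_fin.
  apply: (@le_lt_trans _ _ (\sum_(i <oo) ((K / ((i + k0)%N.+1%:R) ^+ 2)%:E))%E).
    apply: lee_nneseries; first by move=> k _ _; rewrite lee_fin.
    by move=> n _; rewrite lee_fin; apply: bnd'; rewrite leq_addl.
  rewrite (@nneseries_addn R (fun i => (K / (i.+1%:R) ^+ 2)%:E) k0); last first.
    by move=> k; rewrite lee_fin divr_ge0.
  exact: le_lt_trans (series_fin R K k0 K0) (ltey _).
apply: le_lt_trans step1 _; apply: lte_add_pinfty => //; exact: ltey.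
Qed.
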